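(* Let $A\neq0$ be a real $m\times n$ matrix, let $\varepsilon>0$, and let $\beta\in\mathbb R_m$ be such that $\beta^T$ lies in the range of $A$. Then $S(A,\beta)$ is a proper subset of $S(A,\beta,\varepsilon)$.
   Context: $\mathbb R_m$ denotes real row vectors of length $m$, $\mathbb R_m^+$ (resp. $\mathbb R_n^+$) those with all entries strictly positive. For $c\in\mathbb R_m^+$, $\alpha\in\mathbb R_m$, $c^\alpha:=\prod_i c_i^{\alpha_i}$. For a real $m\times n$ matrix $A$ with columns $\alpha_1^T,\dots,\alpha_n^T$, $\beta\in\mathbb R_m$ and $\varepsilon\ge0$, $S(A,\beta,\varepsilon)$ is the set of all $F:\mathbb R_n^+\to\mathbb R$ with $$|F(v_1c^{\alpha_1},\dots,v_nc^{\alpha_n})-F(v_1,\dots,v_n)c^\beta|\le\varepsilon|F(v_1,\dots,v_n)|c^\beta$$ for all $v_1,\dots,v_n>0$ and all $c\in\mathbb R_m^+$; $S(A,\beta):=S(A,\beta,0)$. *)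

(* Defs.v *)
From Stdlib Require Import Reals Lra Lia Arith.
Open Scope R_scope.

Fixpoint prodR (m : nat) (f : nat -> R) : R :=
  match m with
  | O => 1
  | S k => prodR k f * f k
  end.

Fixpoint sumR (n : nat) (f : nat -> R) : R :=
  match n with
  | O => 0
  | S k => sumR k f + f k
  end.

(* A real m x n matrix is represented by its entries A i j for i < m, j < n
   (entries outside this range are irrelevant); row vectors of length m by
   functions nat -> R, of which only the first m entries matter. *)

Definition cpow (m : nat) (c alpha : nat -> R) : R :=
  prodR m (fun i => Rpower (c i) (alpha i)).

Definition posvec (k : nat) (v : nat -> R) : Prop := forall i, (i < k)%nat -> 0 < v i.

Definition scaled (m n : nat) (A : nat -> nat -> R) (c v : nat -> R) : nat -> R :=
  fun j => if (j <? n)%nat then v j * cpow m c (fun i => A i j) else v j.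

Definition S_eps (m n : nat) (A : nat -> nat -> R) (beta : nat -> R) (eps : R)
  (F : (nat -> R) -> R) : Prop :=
  forall v c, posvec n v -> posvec m c ->
    Rabs (F (scaled m n A c v) - F v * cpow m c beta)
      <= eps * Rabs (F v) * cpow m c beta.

Definition S0 (m n : nat) (A : nat -> nat -> R) (beta : nat -> R) :=
  S_eps m n A beta 0.

(* Main.v *)
Require Import Defs.
From Stdlib Require Import Reals Lra Lia Arith.
Open Scope R_scope.

Lemma sumR_ext n f g : (forall i, (i < n)%nat -> f i = g i) -> sumR n f = sumR n g.
Proof. induction n; simpl; intros H; auto. rewrite IHn by (intros; apply H; lia). rewrite H by lia; auto. Qed.

Lemma prodR_exp m f : prodR m (fun i => exp (f i)) = exp (sumR m f).
Proof. induction m; simpl. now rewrite exp_0. rewrite IHm, exp_plus; auto. Qed.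

Lemma sumR_plus n f g : sumR n (fun i => f i + g i) = sumR n f + sumR n g.
Proof. induction n; simpl; [lra|rewrite IHn; lra]. Qed.

Lemma sumR_scal n a f : a * sumR n f = sumR n (fun i => a * f i).
Proof. induction n; simpl; [lra|rewrite <- IHn; lra]. Qed.

Lemma sumR_swap n m f : sumR n (fun j => sumR m (fun i => f i j)) = sumR m (fun i => sumR n (fun j => f i j)).
Proof.
  induction n; simpl.
  - induction m; simpl; lra.
  - rewrite IHn. rewrite <- sumR_plus. auto.
Qed.

Lemma sumR_single m k a : sumR m (fun i => if (i =? k)%nat then a else 0) = if (k <? m)%nat then a else 0.
Proof.
  induction m; simpl. destruct k; auto.
  rewrite IHm. destruct (Nat.eqb_spec m k).
  - subst. replace (k <? k)%nat with false by (symmetry; apply Nat.ltb_ge; lia).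
    replace (k <? S k)%nat with true by (symmetry; apply Nat.ltb_lt; lia). lra.
  - destruct (Nat.ltb_spec k m); destruct (Nat.ltb_spec k (S m)); try lra; lia.
Qed.

Lemma cpow_exp m c a : cpow m c a = exp (sumR m (fun i => a i * ln (c i))).
Proof. unfold cpow, Rpower. apply prodR_exp. Qed.

Definition Lg n (x : nat -> R) (v : nat -> R) := sumR n (fun j => x j * ln (v j)).

Lemma Lg_scaled m n A x beta c v :
  (forall i, (i < m)%nat -> sumR n (fun j => A i j * x j) = beta i) ->
  posvec n v ->
  Lg n x (scaled m n A c v) = Lg n x v + sumR m (fun i => beta i * ln (c i)).
Proof.
  intros Hx Hv. unfold Lg.
  rewrite (sumR_ext n _ (fun j => x j * ln (v j) + sumR m (fun i => (A i j * x j) * ln (c i)))).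
  2:{ intros j Hj. unfold scaled. replace (j <? n)%nat with true by (symmetry; apply Nat.ltb_lt; lia).
      rewrite ln_mult. 2: apply Hv; auto. 2: rewrite cpow_exp; apply exp_pos.
      rewrite cpow_exp, ln_exp, Rmult_plus_distr_l, sumR_scal. f_equal.
      apply sumR_ext; intros; ring. }
  rewrite sumR_plus, sumR_swap. f_equal. apply sumR_ext; intros i Hi.
  rewrite <- Hx by auto. rewrite Rmult_comm, sumR_scal. apply sumR_ext; intros; ring.
Qed.

Theorem mainTheorem8 (m n : nat) (A : nat -> nat -> R) (beta : nat -> R) (eps : R) :
  (exists i j, (i < m)%nat /\ (j < n)%nat /\ A i j <> 0) ->
  0 < eps ->
  (exists x : nat -> R, forall i, (i < m)%nat -> sumR n (fun j => A i j * x j) = beta i) ->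
  (forall F, S0 m n A beta F -> S_eps m n A beta eps F) /\
  (exists F, S_eps m n A beta eps F /\ ~ S0 m n A beta F).
Proof.
  intros [i0 [j0 [Hi0 [Hj0 HA]]]] He [x Hx]. split.
  - intros F H v c Hv Hc. specialize (H v c Hv Hc).
    rewrite cpow_exp in *. pose proof (exp_pos (sumR m (fun i => beta i * ln (c i)))).
    pose proof (Rabs_pos (F v)).
    eapply Rle_trans; [exact H|]. rewrite !Rmult_0_l. apply Rmult_le_pos; [apply Rmult_le_pos|]; lra.
  - set (g := fun v : nat -> R => 1 + eps * (if Rle_dec 1 (v j0) then 1 else 0)).
    assert (Hg1 : forall v, 1 <= g v) by (intros v; unfold g; destruct Rle_dec; lra).
    assert (Hg2 : forall v, g v <= 1 + eps) by (intros v; unfold g; destruct Rle_dec; lra).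
    exists (fun v => exp (Lg n x v) * g v). split.
    + intros v c Hv Hc. rewrite (Lg_scaled m n A x beta c v Hx Hv), exp_plus, <- cpow_exp.
      set (E := exp (Lg n x v)). set (C := cpow m c beta).
      assert (0 < E) by apply exp_pos. assert (0 < C) by (unfold C; rewrite cpow_exp; apply exp_pos).
      replace (E * C * g (scaled m n A c v) - E * g v * C) with ((E * C) * (g (scaled m n A c v) - g v)) by ring.
      rewrite Rabs_mult, (Rabs_right (E*C)) by nra.
      rewrite (Rabs_right (E * g v)) by (pose proof (Hg1 v); nra).
      assert (Rabs (g (scaled m n A c v) - g v) <= eps * g v).
      { pose proof (Hg1 v); pose proof (Hg2 v); pose proof (Hg1 (scaled m n A c v)); pose proof (Hg2 (scaled m n A c v)).
        apply Rabs_le; nra. }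
      assert (0 < E * C) by nra. nra.
    + intros H.
      set (v := fun _ : nat => 1).
      set (t := -1 / A i0 j0).
      set (c := fun i => exp (if (i =? i0)%nat then t else 0)).
      assert (Hv : posvec n v) by (intros i _; unfold v; lra).
      assert (Hc : posvec m c) by (intros i _; apply exp_pos).
      specialize (H v c Hv Hc). cbv beta in H. rewrite (Lg_scaled m n A x beta c v Hx Hv), exp_plus, <- cpow_exp in H.
      assert (Hs : scaled m n A c v j0 = exp (-1)).
      { unfold scaled. replace (j0 <? n)%nat with true by (symmetry; apply Nat.ltb_lt; lia).
        unfold v. rewrite Rmult_1_l, cpow_exp. f_equal.
        rewrite (sumR_ext m _ (fun i => if (i =? i0)%nat then A i0 j0 * t else 0)).
        - rewrite sumR_single. replace (i0 <? m)%nat with true by (symmetry; apply Nat.ltb_lt; lia).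
          unfold t. field. auto.
        - intros i Hi. unfold c. rewrite ln_exp. destruct (Nat.eqb_spec i i0); [subst; auto|ring]. }
      assert (Hgs : g (scaled m n A c v) = 1).
      { unfold g. rewrite Hs. destruct Rle_dec as [r|]; [|lra].
        exfalso. assert (exp (-1) < exp 0) by (apply exp_increasing; lra). rewrite exp_0 in H0. lra. }
      assert (Hgv : g v = 1 + eps) by (unfold g, v; destruct Rle_dec; lra).
      rewrite Hgs, Hgv in H.
      set (E := exp (Lg n x v)) in H. set (C := cpow m c beta) in H.
      assert (0 < E) by apply exp_pos. assert (0 < C) by (unfold C; rewrite cpow_exp; apply exp_pos).
      rewrite !Rmult_0_l in H.
      replace (E * C * 1 - E * (1 + eps) * C) with (- (E * C * eps)) in H by ring.
      rewrite Rabs_Ropp, Rabs_right in H by (apply Rle_ge; apply Rmult_le_pos; nra).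
      assert (0 < E * C * eps) by (apply Rmult_lt_0_compat; nra). lra.
Qed.
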